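(* Let $t_1,\dots,t_n$ be basic terms, $\kappa$ a time variable, and $\Delta$ the saturation of the sample set $\{t_1[\kappa],\dots,t_n[\kappa]\}$. Then $\mathbf{W}\not\models 1\le t_1\vee\cdots\vee t_n$ if, and only if, there exists a $\Delta$-diagram $\delta$ such that $\delta(\kappa)>\delta(t_i[\kappa])$ for each $i\in\{1,\dots,n\}$.
   Context: Time warps: join-preserving maps $f\colon\omega^+\to\omega^+$, $\omega^+=\omega\cup\{\omega\}$, ordered pointwise. $\mathbf{W}=\langle W,\wedge,\vee,\circ,{}^\star,\mathrm{id}\rangle$: pointwise meet/join, composition, identity, and $f^\star$ = largest time warp $h$ with $f\circ h\le p$, where $p(m)=\bigvee\{k\in\omega\mid k<m\}$. Terms are built from variables with $\wedge,\vee,\cdot,{}',1$ (interpreted as $\wedge,\vee,\circ,{}^\star,\mathrm{id}$); basic terms use only variables, $\cdot,{}',1$. Samples (formal expressions) are given by the grammar $\alpha::=\kappa\mid t[\alpha]\mid \mathrm{suc}(\alpha)\mid\mathrm{last}(t)$ with $\kappa$ from a countably infinite set of time variables and $t$ a basic term. Let $\leadsto$ be the relation on samples with $t[\alpha]\leadsto\alpha$, $\mathrm{suc}(\alpha)\leadsto\alpha$, $t[\alpha]\leadsto t[\mathrm{last}(t)]$, $(tu)[\alpha]\leadsto t[u[\alpha]]$, $t'[\alpha]\leadsto t[t'[\alpha]]$, $t'[\alpha]\leadsto t[\mathrm{suc}(t'[\alpha])]$. The saturation of a sample set $\Delta_0$ is the set of samples $\beta$ with $\alpha\leadsto^*\beta$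 for some $\alpha\in\Delta_0$ ($\leadsto^*$ reflexive-transitive closure); $\Delta$ is saturated if closed under $\leadsto$. Let $S(n)=n+1$ for $n\in\omega$, $S(\omega)=\omega$. For a saturated $\Delta$, a $\Delta$-diagram is a map $\delta\colon\Delta\to\omega^+$ such that, whenever the samples mentioned belong to $\Delta$: (1) $\delta(\alpha)\le\delta(\beta)\Rightarrow\delta(t[\alpha])\le\delta(t[\beta])$; (2) $\delta(\alpha)=0\Rightarrow\delta(t[\alpha])=0$; (3) $\delta(\mathrm{suc}(\alpha))=S(\delta(\alpha))$; (4) for $t[\alpha]\in\Delta$: $\delta(\mathrm{last}(t))\le\delta(\alpha)\iff\delta(t[\mathrm{last}(t)])=\delta(t[\alpha])$; (5) $\delta(\mathrm{last}(t))=\omega\Rightarrow\delta(t[\mathrm{last}(t)])=\omega$; (6) $\delta(1[\alpha])=\delta(\alpha)$; (7) $\delta(\mathrm{last}(1))=\omega$; (8) $\delta((tu)[\alpha])=\delta(t[u[\alpha]])$; (9) $\delta(\mathrm{last}(tu))=\omega\Rightarrow\delta(\mathrm{last}(t))=\delta(\mathrm{last}(u))=\omega$; (10) for $t'[\alpha]\in\Delta$: $0<\delta(\alpha)<\omega\Rightarrow\delta(t[t'[\alpha]])<\delta(\alpha)$; (11) for $t'[\alpha]\in\Delta$: $\delta(t'[\alpha])<\omega\Rightarrow\delta(\alpha)\le\delta(t[\mathrm{suc}(t'[\alpha])])$; (12) $\delta(\mathrm{last}(t'))=\omega\Rightarrow\delta(\mathrm{last}(t))=\omega$. *)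

(* Defs.v *)
From Stdlib Require Import List Relations ClassicalEpsilon.
Import ListNotations.

Inductive onat : Type := fin (n : nat) | omega.

Definition ole (x y : onat) : Prop :=
  match x, y with
  | _, omega => True
  | fin m, fin n => m <= n
  | omega, fin _ => False
  end.

Definition olt (x y : onat) : Prop := ole x y /\ x <> y.

Definition omin (x y : onat) : onat :=
  match x, y with
  | fin m, fin n => fin (Nat.min m n)
  | omega, y => y
  | x, omega => x
  end.

Definition omax (x y : onat) : onat :=
  match x, y with
  | fin m, fin n => fin (Nat.max m n)
  | _, _ => omega
  end.

Definition is_lub (S : onat -> Prop) (x : onat) : Prop :=
  (forall s, S s -> ole s x) /\ (forall y, (forall s, S s -> ole s y) -> ole x y).

Definition is_tw (f : onat -> onat) : Prop :=
  forall (S : onat -> Prop) (x : onat),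
    is_lub S x -> is_lub (fun y => exists s, S s /\ y = f s) (f x).

Definition fle (f g : onat -> onat) : Prop := forall m, ole (f m) (g m).

(** p(m) = \/ { k in omega | k < m } (written out) *)
Definition pw (m : onat) : onat :=
  match m with
  | fin 0 => fin 0
  | fin (S n) => fin n
  | omega => omega
  end.

Definition is_star (f h : onat -> onat) : Prop :=
  is_tw h /\ fle (fun m => f (h m)) pw /\
  (forall h', is_tw h' -> fle (fun m => f (h' m)) pw -> fle h' h).

Definition star (f : onat -> onat) : onat -> onat :=
  epsilon (inhabits (fun m : onat => m)) (fun h => is_star f h).

Inductive term : Type :=
| TVar (i : nat)
| TMeet (t u : term)
| TJoin (t u : term)
| TMul (t u : term)
| TStar (t : term)
| TOne.

Inductive basic : term -> Prop :=
| basic_var i : basic (TVar i)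
| basic_mul t u : basic t -> basic u -> basic (TMul t u)
| basic_star t : basic t -> basic (TStar t)
| basic_one : basic TOne.

Fixpoint eval (v : nat -> onat -> onat) (t : term) : onat -> onat :=
  match t with
  | TVar i => v i
  | TMeet t u => fun m => omin (eval v t m) (eval v u m)
  | TJoin t u => fun m => omax (eval v t m) (eval v u m)
  | TMul t u => fun m => eval v t (eval v u m)
  | TStar t => star (eval v t)
  | TOne => fun m => m
  end.

Definition W_models_le (s t : term) : Prop :=
  forall v : nat -> onat -> onat, (forall i, is_tw (v i)) ->
    fle (eval v s) (eval v t).

Fixpoint join_list (t1 : term) (ts : list term) : term :=
  match ts with
  | [] => t1
  | t2 :: ts' => TJoin t1 (join_list t2 ts')
  end.

Inductive sample : Type :=
| SVar (k : nat)
| SApp (t : term) (a : sample)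
| SSuc (a : sample)
| SLast (t : term).

Inductive step : sample -> sample -> Prop :=
| st_app t a : step (SApp t a) a
| st_suc a : step (SSuc a) a
| st_last t a : step (SApp t a) (SApp t (SLast t))
| st_mul t u a : step (SApp (TMul t u) a) (SApp t (SApp u a))
| st_star1 t a : step (SApp (TStar t) a) (SApp t (SApp (TStar t) a))
| st_star2 t a : step (SApp (TStar t) a) (SApp t (SSuc (SApp (TStar t) a))).

Definition saturation (D0 : sample -> Prop) (b : sample) : Prop :=
  exists a, D0 a /\ clos_refl_trans sample step a b.

Definition Ssucc (x : onat) : onat :=
  match x with fin n => fin (S n) | omega => omega end.

Definition is_diagram (D : sample -> Prop) (d : sample -> onat) : Prop :=
  (forall t a b, D a -> D b -> D (SApp t a) -> D (SApp t b) ->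
     ole (d a) (d b) -> ole (d (SApp t a)) (d (SApp t b))) /\
  (forall t a, D a -> D (SApp t a) -> d a = fin 0 -> d (SApp t a) = fin 0) /\
  (forall a, D a -> D (SSuc a) -> d (SSuc a) = Ssucc (d a)) /\
  (forall t a, D (SApp t a) -> D a -> D (SLast t) -> D (SApp t (SLast t)) ->
     (ole (d (SLast t)) (d a) <-> d (SApp t (SLast t)) = d (SApp t a))) /\
  (forall t, D (SLast t) -> D (SApp t (SLast t)) ->
     d (SLast t) = omega -> d (SApp t (SLast t)) = omega) /\
  (forall a, D (SApp TOne a) -> D a -> d (SApp TOne a) = d a) /\
  (D (SLast TOne) -> d (SLast TOne) = omega) /\
  (forall t u a, D (SApp (TMul t u) a) -> D (SApp t (SApp u a)) ->
     d (SApp (TMul t u) a) = d (SApp t (SApp u a))) /\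
  (forall t u, D (SLast (TMul t u)) -> D (SLast t) -> D (SLast u) ->
     d (SLast (TMul t u)) = omega -> d (SLast t) = omega /\ d (SLast u) = omega) /\
  (forall t a, D (SApp (TStar t) a) -> D a -> D (SApp t (SApp (TStar t) a)) ->
     olt (fin 0) (d a) -> olt (d a) omega ->
     olt (d (SApp t (SApp (TStar t) a))) (d a)) /\
  (forall t a, D (SApp (TStar t) a) -> D a ->
     D (SApp t (SSuc (SApp (TStar t) a))) ->
     olt (d (SApp (TStar t) a)) omega ->
     ole (d a) (d (SApp t (SSuc (SApp (TStar t) a))))) /\
  (forall t, D (SLast (TStar t)) -> D (SLast t) ->
     d (SLast (TStar t)) = omega -> d (SLast t) = omega).

(* Main.v *)
Require Import Defs.
From Stdlib Require Import List Relations Classical ClassicalEpsilon Lia Arith.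
Import ListNotations.


Lemma ole_refl a : ole a a.
Proof. destruct a; simpl; auto. Qed.

Lemma ole_trans a b c : ole a b -> ole b c -> ole a c.
Proof. destruct a, b, c; simpl; intros; auto; try lia; contradiction. Qed.

Lemma ole_antisym a b : ole a b -> ole b a -> a = b.
Proof. destruct a, b; simpl; intros; auto; try contradiction. f_equal; lia. Qed.

Lemma ole_total a b : ole a b \/ ole b a.
Proof. destruct a, b; simpl; auto. lia. Qed.

Lemma not_ole a b : ~ ole a b -> olt b a.
Proof.
  intro H. destruct (ole_total a b) as [h|h]; [contradiction|].
  split; auto. intro e; subst; apply H, ole_refl.
Qed.

Lemma olt_not_ole a b : olt a b -> ~ ole b a.
Proof. intros [h1 h2] h3. apply h2, ole_antisym; auto. Qed.

Lemma ole_omega a : ole a omega.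
Proof. destruct a; simpl; auto. Qed.

Lemma omega_ole a : ole omega a -> a = omega.
Proof. destruct a; simpl; auto; contradiction. Qed.

Lemma ole_0 a : ole (fin 0) a.
Proof. destruct a; simpl; auto; lia. Qed.

Lemma ole_omax a b c : ole (omax a b) c <-> ole a c /\ ole b c.
Proof. destruct a, b, c; simpl; split; intros; try lia; intuition; try lia. Qed.

Lemma omax_ge_l a b : ole a (omax a b).
Proof. destruct a, b; simpl; auto; lia. Qed.
Lemma omax_ge_r a b : ole b (omax a b).
Proof. destruct a, b; simpl; auto; lia. Qed.

Lemma omax_cases a b : omax a b = a \/ omax a b = b.
Proof. destruct a, b; simpl; auto. destruct (Nat.max_spec n n0) as [[_ ->]|[_ ->]]; auto. Qed.

Lemma ole_omin a b c : ole c (omin a b) <-> ole c a /\ ole c b.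
Proof. destruct a, b, c; simpl; split; intros; try lia; intuition; try lia. Qed.

Lemma omin_le_l a b : ole (omin a b) a.
Proof. destruct a, b; simpl; auto; lia. Qed.
Lemma omin_le_r a b : ole (omin a b) b.
Proof. destruct a, b; simpl; auto; lia. Qed.

Lemma omin_cases a b : omin a b = a \/ omin a b = b.
Proof. destruct a, b; simpl; auto. destruct (Nat.min_spec n n0) as [[_ ->]|[_ ->]]; auto. Qed.

Lemma least_nat (P : nat -> Prop) n : P n -> exists m, P m /\ forall j, P j -> m <= j.
Proof.
  induction n as [n IH] using (well_founded_induction lt_wf). intro Hn.
  destruct (classic (exists j, j < n /\ P j)) as [[j [hj Pj]]|N].
  - exact (IH j hj Pj).
  - exists n; split; auto. intros j Pj. destruct (le_lt_dec n j); auto.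
    exfalso; apply N; eauto.
Qed.

Lemma least_onat (S : onat -> Prop) x : S x -> exists m, S m /\ forall y, S y -> ole m y.
Proof.
  intro Hx.
  destruct (classic (exists n, S (fin n))) as [[n Hn]|N].
  - destruct (least_nat (fun n => S (fin n)) n Hn) as [m [Hm Hl]].
    exists (fin m); split; auto. intros [j|] Hj; simpl; auto.
  - exists x; split; auto. destruct x as [n|]. { exfalso; eauto. }
    intros [j|] Hj; simpl; auto. exfalso; eauto.
Qed.

Lemma lub_exists (S : onat -> Prop) : exists x, is_lub S x.
Proof.
  destruct (least_onat (fun y => forall s, S s -> ole s y) omega) as [m [H1 H2]].
  { intros; apply ole_omega. }
  exists m; split; auto.
Qed.

Lemma is_lub_unique S x y : is_lub S x -> is_lub S y -> x = y.
Proof. intros [a b] [c d]. apply ole_antisym; auto. Qed.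

Lemma is_lub_ext (S T : onat -> Prop) x : (forall y, S y <-> T y) -> is_lub S x -> is_lub T x.
Proof. intros E [a b]; split; intros; [apply a, E; auto | apply b; intros; apply H, E; auto]. Qed.

Definition is_glb (S : onat -> Prop) (x : onat) : Prop :=
  (forall s, S s -> ole x s) /\ (forall y, (forall s, S s -> ole y s) -> ole y x).

Lemma glb_exists (S : onat -> Prop) : exists x, is_glb S x.
Proof.
  destruct (classic (exists s, S s)) as [[s Hs]|N].
  - destruct (least_onat S s Hs) as [m [H1 H2]]. exists m; split; auto.
  - exists omega; split. intros s Hs; exfalso; eauto. intros; apply ole_omega.
Qed.

Definition osup (S : onat -> Prop) : onat := epsilon (inhabits omega) (is_lub S).
Definition oinf (S : onat -> Prop) : onat := epsilon (inhabits omega) (is_glb S).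
Lemma osup_spec S : is_lub S (osup S).
Proof. unfold osup. apply epsilon_spec, lub_exists. Qed.
Lemma oinf_spec S : is_glb S (oinf S).
Proof. unfold oinf. apply epsilon_spec, glb_exists. Qed.

Lemma lub_fin_attained (A : onat -> Prop) V : is_lub A (fin V) -> (exists s, A s) -> A (fin V).
Proof.
  intros [H1 H2] [s Hs]. apply NNPP; intro N.
  destruct V as [|V].
  - assert (s = fin 0). { apply ole_antisym; auto. apply ole_0. } subst; contradiction.
  - assert (ole (fin (S V)) (fin V)); [|simpl in *; lia].
    apply H2. intros y Hy. specialize (H1 y Hy). destruct y as [j|]; simpl in *; [|contradiction].
    destruct (Nat.eq_dec j (S V)); [subst; contradiction|lia].
Qed.

Definition mono (f : onat -> onat) := forall a b, ole a b -> ole (f a) (f b).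
Definition cont (f : onat -> onat) := is_lub (fun y => exists n, y = f (fin n)) (f omega).

Lemma lub_pair a b : ole a b -> is_lub (fun y => y = a \/ y = b) b.
Proof. intro h; split. intros s [->| ->]; auto using ole_refl. intros y Hy; apply Hy; auto. Qed.

Lemma lub_empty : is_lub (fun _ => False) (fin 0).
Proof. split; [tauto| intros; apply ole_0]. Qed.

Lemma lub_nats : is_lub (fun y => exists n, y = fin n) omega.
Proof.
  split. intros; apply ole_omega.
  intros [y|] H; simpl; auto. specialize (H (fin (S y)) (ex_intro _ _ eq_refl)). simpl in H; lia.
Qed.

Lemma tw_mono f : is_tw f -> mono f.
Proof.
  intros T a b h. destruct (T _ _ (lub_pair a b h)) as [H1 _]. apply H1. eauto.
Qed.

Lemma tw_zero f : is_tw f -> f (fin 0) = fin 0.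
Proof.
  intros T. destruct (T _ _ lub_empty) as [_ H2]. apply ole_antisym; [|apply ole_0].
  apply H2. intros s [x [[] _]].
Qed.

Lemma tw_cont f : is_tw f -> cont f.
Proof.
  intros T. destruct (T _ _ lub_nats) as [H1 H2]. split.
  - intros s [n ->]. apply H1; eauto.
  - intros y Hy. apply H2. intros s [x [[n ->] ->]]. apply Hy; eauto.
Qed.

Lemma tw_intro f : mono f -> f (fin 0) = fin 0 -> cont f -> is_tw f.
Proof.
  intros M Z [C1 C2] S x [L1 L2]. split.
  - intros y [s [Hs ->]]. apply M, L1, Hs.
  - intros y Hy. destruct x as [n|].
    + (* finite lub attained or S empty *)
      destruct (classic (exists s, S s)) as [E|NE].
      * assert (S (fin n)) by (apply lub_fin_attained; [split|]; auto). apply Hy; eauto.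
      * assert (fin n = fin 0). { apply ole_antisym; [apply L2; intros s Hs; exfalso; eauto|apply ole_0]. }
        rewrite H, Z. apply ole_0.
    + destruct (classic (S omega)) as [Hw|Hw]. { apply Hy; eauto. }
      apply C2. intros s [m ->].
      destruct (classic (exists s, S s /\ ole (fin m) s)) as [[s [Hs Hms]]|N].
      * apply ole_trans with (f s); [apply M, Hms| apply Hy; eauto].
      * exfalso. assert (ole omega (fin m)); [|simpl in *; contradiction].
        apply L2. intros s Hs. destruct (ole_total s (fin m)) as [h|h]; auto.
        exfalso; eauto.
Qed.

Lemma tw_id : is_tw (fun m => m).
Proof. intros S x H. eapply is_lub_ext; [|exact H]. intro y; split; [intros; exists y; auto|intros [s [h ->]]; auto]. Qed.

Lemma tw_comp f g : is_tw f -> is_tw g -> is_tw (fun m => f (g m)).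
Proof.
  intros F G S x H. specialize (F _ _ (G _ _ H)). eapply is_lub_ext; [|exact F].
  intro y; split.
  - intros [s [[s0 [h1 ->]] ->]]; eauto.
  - intros [s0 [h ->]]; eauto.
Qed.


Section StarEx.
Variable f : onat -> onat.
Hypothesis F : is_tw f.

Definition Gf (y : onat) := osup (fun k => ole (f k) y).
Lemma Gf_le y : ole (f (Gf y)) y.
Proof.
  destruct (F _ _ (osup_spec (fun k => ole (f k) y))) as [_ H]. apply H.
  intros s [k [hk ->]]; auto.
Qed.
Lemma Gf_ge y k : ole (f k) y -> ole k (Gf y).
Proof. intro h. apply (proj1 (osup_spec _)); auto. Qed.
Lemma Gf_mono y1 y2 : ole y1 y2 -> ole (Gf y1) (Gf y2).
Proof. intro h. apply Gf_ge. eapply ole_trans; [apply Gf_le|auto]. Qed.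

Definition hf (n : nat) := match n with 0 => fin 0 | S n => Gf (fin n) end.
Definition hst (m : onat) := match m with fin n => hf n | omega => osup (fun y => exists n, y = hf n) end.

Lemma hst_star : is_star f hst.
Proof.
  assert (M : mono hst).
  { intros [a|] [b|] h; simpl in *.
    - destruct a; simpl; [apply ole_0|]. destruct b; [lia|]. simpl; apply Gf_mono; simpl; lia.
    - apply (proj1 (osup_spec _)); eauto.
    - contradiction.
    - apply ole_refl. }
  split; [|split].
  - apply tw_intro; auto. unfold cont; simpl. exact (osup_spec _).
  - intros [[|n]|]; simpl.
    + rewrite tw_zero; auto; apply ole_refl.
    + apply Gf_le.
    + apply ole_omega.
  - intros h' T' L'.
    assert (Hfin : forall n, ole (h' (fin n)) (hf n)).
    { intros [|n]; simpl.
      + rewrite tw_zero; auto; apply ole_refl.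
      + apply Gf_ge. apply (L' (fin (S n))). }
    intros [n|]; [apply Hfin|].
    destruct (tw_cont _ T') as [_ C]. apply C. intros s [n ->].
    eapply ole_trans; [apply Hfin|]. simpl. apply (proj1 (osup_spec _)); eauto.
Qed.
End StarEx.

Lemma star_spec f : is_tw f -> is_star f (star f).
Proof. intro F. unfold star. apply epsilon_spec. exists (hst f). apply hst_star; auto. Qed.

Definition oleb (a b : onat) : bool :=
  match a, b with _, omega => true | fin m, fin n => Nat.leb m n | omega, fin _ => false end.
Lemma oleb_ole a b : oleb a b = true <-> ole a b.
Proof. destruct a, b; simpl; split; intros; auto; try discriminate; try contradiction.
  apply Nat.leb_le; auto. apply Nat.leb_le; auto. Qed.

Lemma mono_omax f a b : mono f -> f (omax a b) = omax (f a) (f b).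
Proof.
  intro M. destruct (ole_total a b) as [h|h].
  - assert (omax a b = b) as ->. { apply ole_antisym; [apply ole_omax; split; auto using ole_refl| apply omax_ge_r]. }
    apply ole_antisym; [apply omax_ge_r|apply ole_omax; split; auto using ole_refl].
  - assert (omax a b = a) as ->. { apply ole_antisym; [apply ole_omax; split; auto using ole_refl| apply omax_ge_l]. }
    apply ole_antisym; [apply omax_ge_l|apply ole_omax; split; auto using ole_refl].
Qed.

Lemma star_galois f h k V m : is_tw f -> is_star f h -> f k = fin V -> ole (fin (S V)) m -> ole k (h m).
Proof.
  intros F [T [L Mx]] Hk Hm.
  set (c := fun m' => if oleb (fin (S V)) m' then k else fin 0).
  set (h' := fun m' => omax (h m') (c m')).
  assert (Mc : mono c).
  { intros a b hab. unfold c. destruct (oleb (fin (S V)) a) eqn:E1.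
    - apply oleb_ole in E1. assert (oleb (fin (S V)) b = true) as -> by (apply oleb_ole; eapply ole_trans; eauto). apply ole_refl.
    - apply ole_0. }
  assert (Mh := tw_mono _ T).
  assert (T' : is_tw h').
  { apply tw_intro.
    - intros a b hab. unfold h'. apply ole_omax; split.
      + eapply ole_trans; [apply Mh, hab|apply omax_ge_l].
      + eapply ole_trans; [apply Mc, hab|apply omax_ge_r].
    - unfold h', c. rewrite (tw_zero h T). simpl. reflexivity.
    - destruct (tw_cont _ T) as [C1 C2]. split.
      + intros s [n ->]. unfold h'. apply ole_omax; split.
        * eapply ole_trans; [apply C1; eauto|apply omax_ge_l].
        * eapply ole_trans; [apply Mc, ole_omega|apply omax_ge_r].
      + intros y Hy. unfold h'. apply ole_omax; split.
        * apply C2. intros s [n ->]. eapply ole_trans; [apply (omax_ge_l _ (c (fin n)))|apply Hy; exists n; reflexivity].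
        * unfold c. simpl. eapply ole_trans; [|apply (Hy _ (ex_intro _ (S V) eq_refl))].
          eapply ole_trans; [|apply omax_ge_r]. unfold c. rewrite (proj2 (oleb_ole _ _)); [apply ole_refl|simpl; lia]. }
  assert (L' : fle (fun m => f (h' m)) pw).
  { intros m'. unfold h'. rewrite mono_omax by (apply tw_mono; auto). apply ole_omax; split; [apply L|].
    unfold c. destruct (oleb (fin (S V)) m') eqn:E.
    - apply oleb_ole in E. rewrite Hk. destruct m' as [[|j]|]; simpl in *; auto; lia.
    - rewrite (tw_zero f F). apply ole_0. }
  specialize (Mx h' T' L' m). unfold h' in Mx.
  eapply ole_trans; [|exact Mx]. eapply ole_trans; [|apply omax_ge_r]. unfold c.
  rewrite (proj2 (oleb_ole _ _) Hm). apply ole_refl.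
Qed.


Definition is_last (f : onat -> onat) (L : onat) : Prop :=
  (L = omega /\ forall n, f (fin n) <> f omega) \/
  (exists n, L = fin n /\ f (fin n) = f omega /\ forall j, f (fin j) = f omega -> n <= j).

Definition lastf (f : onat -> onat) : onat := epsilon (inhabits omega) (is_last f).

Lemma lastf_spec f : is_last f (lastf f).
Proof.
  unfold lastf. apply epsilon_spec.
  destruct (classic (exists n, f (fin n) = f omega)) as [[n Hn]|N].
  - destruct (least_nat (fun n => f (fin n) = f omega) n Hn) as [m [H1 H2]].
    exists (fin m); right; eauto.
  - exists omega; left; split; auto. intros n e; eauto.
Qed.

Lemma lastf_omega f : lastf f = omega <-> forall n, f (fin n) <> f omega.
Proof.
  destruct (lastf_spec f) as [[-> H]|[n [-> [H1 H2]]]]; split; auto; try discriminate.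
  intros H; exfalso; eapply H; eauto.
Qed.

Lemma last4 f : is_tw f -> forall a, ole (lastf f) a <-> f (lastf f) = f a.
Proof.
  intros F a. assert (M := tw_mono _ F).
  destruct (lastf_spec f) as [[-> H]|[n [-> [H1 H2]]]]; split; intro h.
  - apply omega_ole in h; subst; auto.
  - destruct a as [j|]; [exfalso; apply (H j); auto| apply ole_refl].
  - apply ole_antisym; [apply M; auto| rewrite H1; apply M, ole_omega].
  - destruct a as [j|]; simpl; auto. apply H2. congruence.
Qed.

Lemma last5 f : is_tw f -> lastf f = omega -> f omega = omega.
Proof.
  intros F H. rewrite lastf_omega in H. destruct (f omega) eqn:E; auto. exfalso.
  assert (C := tw_cont _ F). unfold cont in C. rewrite E in C.
  apply lub_fin_attained in C; [|exists (f (fin 0)), 0; reflexivity]. destruct C as [j Hj]. apply (H j). congruence.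
Qed.

Lemma last7 : lastf (fun m => m) = omega.
Proof. apply lastf_omega. intros n; discriminate. Qed.

Lemma fin_ne_omega_le (g : onat -> onat) n : is_tw g -> g omega = omega -> exists j, ole (fin n) (g (fin j)).
Proof.
  intros G Gw. apply NNPP; intro N. destruct (tw_cont _ G) as [_ C2].
  assert (ole (g omega) (fin n)); [|rewrite Gw in H; simpl in H; contradiction].
  apply C2. intros s [j ->]. destruct (ole_total (g (fin j)) (fin n)); auto. exfalso; eauto.
Qed.

Lemma last9 f g : is_tw f -> is_tw g -> lastf (fun m => f (g m)) = omega -> lastf f = omega /\ lastf g = omega.
Proof.
  intros F G H.
  assert (Hw := last5 _ (tw_comp _ _ F G) H). simpl in Hw.
  rewrite lastf_omega in H.
  assert (Gl : lastf g = omega). { apply lastf_omega. intros n e. apply (H n). rewrite e; auto. }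
  split; auto.
  assert (Gw := last5 _ G Gl).
  apply lastf_omega. intros n e.
  destruct (fin_ne_omega_le g n G Gw) as [j hj].
  apply (H j). rewrite Hw.
  assert (f omega = omega). { rewrite Gw in Hw; auto. }
  rewrite H0 in e. apply omega_ole. rewrite <- e. apply (tw_mono _ F); auto.
Qed.

Lemma star_le f h m : is_star f h -> ole (f (h m)) (pw m).
Proof. intros [_ [L _]]; apply L. Qed.

Lemma last12 f : is_tw f -> lastf (star f) = omega -> lastf f = omega.
Proof.
  intros F H. assert (SS := star_spec f F). set (h := star f) in *.
  assert (T : is_tw h) by (apply SS).
  apply NNPP; intro N. rewrite lastf_omega in H.
  assert (exists L, f (fin L) = f omega) as [L HL].
  { apply NNPP; intro N2; apply N, lastf_omega; intros n e; eauto. }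
  destruct (f omega) as [V|] eqn:Ew.
  -
    assert (ole omega (h (fin (S V)))) by (apply (star_galois f h omega V); auto; apply ole_refl).
    apply omega_ole in H0. apply (H (S V)). rewrite H0. symmetry. apply omega_ole. eapply ole_trans; [|apply (tw_mono _ T (fin (S V)) omega I)]. rewrite H0; apply ole_refl.
  -
    assert (Hb : forall n, ole (h (fin n)) (fin L)).
    { intros n. destruct (ole_total (h (fin n)) (fin L)) as [b|b]; auto.
      exfalso. assert (e := star_le f h (fin n) SS).
      assert (ole (f (fin L)) (f (h (fin n)))) by (apply (tw_mono _ F); auto).
      rewrite HL in H0. assert (X := ole_trans _ _ _ H0 e). destruct n; simpl in X; contradiction. }
    destruct (tw_cont _ T) as [C1 C2].
    assert (ole (h omega) (fin L)) by (apply C2; intros s [n ->]; auto).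
    destruct (h omega) as [V|] eqn:Eh; [|simpl in H0; contradiction].
    assert (A := lub_fin_attained _ V (conj C1 C2)).
    destruct A as [n Hn]; [exists (h (fin 0)), 0; reflexivity|]. apply (H n). congruence.
Qed.


Lemma eval_tw v t : (forall i, is_tw (v i)) -> basic t -> is_tw (eval v t).
Proof.
  intros V B; induction B; simpl; auto.
  - apply tw_comp; auto.
  - apply star_spec; auto.
  - apply tw_id.
Qed.

Fixpoint bsample (s : sample) : Prop :=
  match s with
  | SVar _ => True
  | SApp t a => basic t /\ bsample a
  | SSuc a => bsample a
  | SLast t => basic t
  end.

Lemma step_bs a b : step a b -> bsample a -> bsample b.
Proof.
  intros H; destruct H; simpl; intuition.
  - inversion H0; subst; auto.
  - inversion H0; subst; auto.
  - inversion H0; subst; auto.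
  - inversion H0; subst; auto.
Qed.

Lemma sat_bs (D0 : sample -> Prop) b : (forall a, D0 a -> bsample a) -> saturation D0 b -> bsample b.
Proof.
  intros H [a [Ha R]]. specialize (H a Ha). clear Ha. revert H; induction R; intros; [eapply step_bs; eauto|auto|auto].
Qed.

Lemma sat_step (D0 : sample -> Prop) a b : saturation D0 a -> step a b -> saturation D0 b.
Proof. intros [c [Hc R]] S. exists c; split; auto. eapply rt_trans; eauto. apply rt_step; auto. Qed.

Fixpoint sem (v : nat -> onat -> onat) (m : onat) (s : sample) : onat :=
  match s with
  | SVar _ => m
  | SApp t a => eval v t (sem v m a)
  | SSuc a => Ssucc (sem v m a)
  | SLast t => lastf (eval v t)
  end.

Lemma sem_diagram v m (D : sample -> Prop) : (forall i, is_tw (v i)) -> (forall s, D s -> bsample s) ->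
  is_diagram D (sem v m).
Proof.
  intros V B.
  assert (TW : forall t a, D (SApp t a) -> is_tw (eval v t)).
  { intros t a H. apply eval_tw; auto. apply (B _ H). }
  assert (TWl : forall t, D (SLast t) -> is_tw (eval v t)).
  { intros t H. apply eval_tw; auto. apply (B _ H). }
  unfold is_diagram; simpl.
  split; [|split; [|split; [|split; [|split; [|split; [|split; [|split; [|split; [|split; [|split]]]]]]]]]].
  - intros t a b _ _ H _ h. apply (tw_mono _ (TW _ _ H)); auto.
  - intros t a _ H e. rewrite e. apply tw_zero; eauto.
  - auto.
  - intros t a H _ _ _. apply last4; eauto.
  - intros t H _ e. assert (F := TWl t H). rewrite e. apply last5; auto.
  - auto.
  - intros _. apply last7.
  - auto.
  - intros t u H _ _ e. assert (Bt := B _ H). simpl in Bt. inversion Bt; subst.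
    apply last9; auto; apply eval_tw; auto.
  - intros t a H _ _ h1 h2. assert (Bt := B _ H). simpl in Bt. destruct Bt as [Bt _]. inversion Bt; subst.
    assert (F := eval_tw v t V H1). assert (SS := star_spec _ F).
    assert (e := star_le _ _ (sem v m a) SS).
    destruct (sem v m a) as [[|n]|]; simpl in *.
    + exfalso; destruct h1 as [_ h1]; apply h1; reflexivity.
    + split. eapply ole_trans; [exact e|simpl; lia]. intro E; rewrite E in e; simpl in e; lia.
    + destruct h2; contradiction.
  - intros t a H _ _ h. assert (Bt := B _ H). simpl in Bt. destruct Bt as [Bt _]. inversion Bt; subst.
    assert (F := eval_tw v t V H1). assert (SS := star_spec _ F).
    destruct (star (eval v t) (sem v m a)) as [b|] eqn:Eb; [|destruct h; contradiction].
    simpl. destruct (eval v t (fin (S b))) as [W|] eqn:EW; [|apply ole_omega].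
    destruct (ole_total (sem v m a) (fin W)) as [o|o]; auto.
    destruct (classic (sem v m a = fin W)) as [e|ne]; [rewrite e; apply ole_refl|].
    exfalso. assert (ole (fin (S W)) (sem v m a)).
    { destruct (sem v m a) as [j|]; simpl in *; auto. assert (j <> W) by congruence. lia. }
    assert (X := star_galois _ _ _ _ _ F SS EW H0). rewrite Eb in X. simpl in X; lia.
  - intros t H _ e. assert (Bt := B _ H). simpl in Bt. inversion Bt; subst.
    apply last12; auto. apply eval_tw; auto.
Qed.

Lemma join_not_le v m t1 ts : ~ ole m (eval v (join_list t1 ts) m) ->
  Forall (fun t => olt (eval v t m) m) (t1 :: ts).
Proof.
  revert t1; induction ts as [|t2 ts IH]; intros t1 H; simpl in *.
  - constructor; auto. apply not_ole; auto.
  - constructor.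
    + apply not_ole. intro h; apply H. eapply ole_trans; [exact h|apply omax_ge_l].
    + apply IH. intro h; apply H. eapply ole_trans; [exact h|apply omax_ge_r].
Qed.

Lemma dir1 t1 ts k : Forall basic (t1 :: ts) -> ~ W_models_le TOne (join_list t1 ts) ->
   exists d : sample -> onat,
     is_diagram (saturation (fun a => exists t, In t (t1 :: ts) /\ a = SApp t (SVar k))) d /\
     Forall (fun t => olt (d (SApp t (SVar k))) (d (SVar k))) (t1 :: ts).
Proof.
  intros FB H. unfold W_models_le in H.
  apply not_all_ex_not in H as [v H].
  apply imply_to_and in H as [V H].
  unfold fle in H. apply not_all_ex_not in H as [m H]. simpl in H.
  exists (sem v m). split.
  - apply sem_diagram; auto. intros s Hs. eapply sat_bs; [|exact Hs]. intros a [t [Ht ->]]. simpl; split; auto.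
    rewrite Forall_forall in FB; auto.
  - apply join_not_le in H. simpl. exact H.
Qed.


Fixpoint Core (t : term) (a : sample) : list sample :=
  match t with
  | TMul u w => SApp (TMul u w) a ::
      ((Core u (SApp w a) ++ Core u (SLast u) ++ [SLast u]) ++
       (Core w a ++ Core w (SLast w) ++ [SLast w]))
  | TStar u => SApp (TStar u) a :: SSuc (SApp (TStar u) a) ::
      ((Core u (SApp (TStar u) a) ++ Core u (SLast u) ++ [SLast u]) ++
       (Core u (SSuc (SApp (TStar u) a)) ++ Core u (SLast u) ++ [SLast u]))
  | _ => [SApp t a]
  end.
Definition Gen t a := Core t a ++ Core t (SLast t) ++ [SLast t].

Lemma Core_head t a : In (SApp t a) (Core t a).
Proof. destruct t; simpl; auto. Qed.


Ltac sin := match goal with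
 | |- In (SApp ?t ?a) (Core ?t ?a) => apply Core_head
 | H : In ?x ?l |- In ?x ?l => exact H
 | |- In ?x (?l ++ ?m) => apply in_or_app; first [left; sin | right; sin]
 | |- In ?x (?y :: ?l) => first [apply in_eq | apply in_cons; sin]
 end.

Ltac splitin := repeat (match goal with H : In _ (_ ++ _) |- _ => apply in_app_or in H; destruct H as [H|H] end).

Ltac fin_ := splitin; try (match goal with H : In _ [_] |- _ => destruct H as [H|[]]; subst end);
   first [ right; reflexivity | left; sin ].

Lemma Core_step t : forall a b c, In b (Core t a) -> step b c -> In c (Gen t a) \/ c = a.
Proof.
  unfold Gen.
  induction t; intros a b c Hb Hs; cbn [Core] in *;
    try (destruct Hb as [<-|[]]; inversion Hs; subst; fin_).
  -
    destruct Hb as [<-|Hb]; [inversion Hs; subst; fin_|].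
    splitin; try (destruct Hb as [<-|[]]; inversion Hs; fail);
      first [ destruct (IHt1 _ _ _ Hb Hs) as [H|H]; subst; fin_
            | destruct (IHt2 _ _ _ Hb Hs) as [H|H]; subst; fin_ ].
  -
    destruct Hb as [<-|[<-|Hb]]; [inversion Hs; subst; fin_|inversion Hs; subst; fin_|].
    splitin; try (destruct Hb as [<-|[]]; inversion Hs; fail);
      destruct (IHt _ _ _ Hb Hs) as [H|H]; subst; fin_.
Qed.

Lemma Gen_step t a b c : In b (Gen t a) -> step b c -> In c (Gen t a) \/ c = a.
Proof.
  intros Hb Hs. unfold Gen in Hb. apply in_app_or in Hb as [Hb|Hb]; [apply (Core_step t a b c Hb Hs)|].
  apply in_app_or in Hb as [Hb|Hb].
  - destruct (Core_step t _ b c Hb Hs) as [H|H]; unfold Gen in *; left; splitin; subst; try sin.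
  - destruct Hb as [<-|[]]; inversion Hs.
Qed.

Lemma sat_in (l : list term) k b :
  saturation (fun a => exists t, In t l /\ a = SApp t (SVar k)) b ->
  In b (SVar k :: flat_map (fun t => Gen t (SVar k)) l).
Proof.
  intros [a [[t [Ht ->]] R]].
  assert (Q : b = SVar k \/ In b (Gen t (SVar k))).
  { apply clos_rt_rt1n in R.
    assert (Q0 : SApp t (SVar k) = SVar k \/ In (SApp t (SVar k)) (Gen t (SVar k))).
    { right. unfold Gen. sin. }
    revert Q0. induction R as [|x y z S R IH]; auto. intros Q. apply IH.
    destruct Q as [->|Q]; [inversion S|]. destruct (Gen_step _ _ _ _ Q S); auto. }
  destruct Q as [->|Q]; [left; auto|]. right. apply in_flat_map. eauto.
Qed.

Lemma list_bound (d : sample -> onat) (l : list sample) :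
  exists N, forall s, In s l -> forall j, d s = fin j -> j <= N.
Proof.
  induction l as [|x l [N IH]].
  - exists 0; intros s [].
  - destruct (d x) as [j0|] eqn:E.
    + exists (N + j0). intros s [<-|Hs] j Hj; [rewrite E in Hj; injection Hj; lia|]. specialize (IH s Hs j Hj); lia.
    + exists N. intros s [<-|Hs] j Hj; [congruence|]. eauto.
Qed.


Lemma star_upper f h a j : is_tw f -> is_star f h -> ~ ole (f (fin (S j))) (pw a) -> ole (h a) (fin j).
Proof.
  intros F SS N. destruct (ole_total (h a) (fin j)) as [o|o]; auto.
  destruct (classic (h a = fin j)) as [e|ne]; [rewrite e; apply ole_refl|].
  exfalso; apply N. eapply ole_trans; [|apply (star_le f h a SS)]. apply (tw_mono _ F).
  destruct (h a) as [i|]; simpl in *; auto. assert (i <> j) by congruence. lia.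
Qed.

Lemma star_omega_fin f h j V : is_tw f -> is_star f h -> f (fin j) = fin V -> f (fin (S j)) = omega -> h omega = fin j.
Proof.
  intros F SS E1 E2. assert (T : is_tw h) by apply SS.
  apply ole_antisym.
  - destruct (tw_cont _ T) as [_ C]. apply C. intros s [n ->]. apply (star_upper f); auto.
    rewrite E2. destruct n; simpl; auto.
  - eapply ole_trans; [apply (star_galois f h (fin j) V (fin (S V))); auto; apply ole_refl|].
    apply (tw_mono _ T), ole_omega.
Qed.

Lemma star_omega_omega f h : is_tw f -> is_star f h -> (forall n, f (fin n) <> omega) -> h omega = omega.
Proof.
  intros F SS H. assert (T : is_tw h) by apply SS.
  destruct (h omega) as [j|] eqn:E; auto. exfalso.
  destruct (f (fin (S j))) as [V|] eqn:EV; [|eapply H; eauto].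
  assert (X := star_galois f h (fin (S j)) V (fin (S V)) F SS EV (ole_refl _)).
  assert (Y := tw_mono _ T (fin (S V)) omega I). rewrite E in Y.
  assert (Z := ole_trans _ _ _ X Y). simpl in Z; lia.
Qed.

Lemma olt_0_S n : olt (fin 0) (fin (S n)).
Proof. split; simpl; [lia|discriminate]. Qed.
Lemma olt_fin_omega n : olt (fin n) omega.
Proof. split; simpl; [auto|discriminate]. Qed.

Section Back.
Variable D : sample -> Prop.
Variable d : sample -> onat.
Hypothesis Dstep : forall a b, D a -> step a b -> D b.
Hypothesis Dbasic : forall s, D s -> bsample s.
Variable N : nat.
Hypothesis HN : forall s, D s -> forall j, d s = fin j -> j <= N.
Hypothesis H1 : forall t a b, D a -> D b -> D (SApp t a) -> D (SApp t b) ->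
     ole (d a) (d b) -> ole (d (SApp t a)) (d (SApp t b)).
Hypothesis H2 : forall t a, D a -> D (SApp t a) -> d a = fin 0 -> d (SApp t a) = fin 0.
Hypothesis H3 : forall a, D a -> D (SSuc a) -> d (SSuc a) = Ssucc (d a).
Hypothesis H4 : forall t a, D (SApp t a) -> D a -> D (SLast t) -> D (SApp t (SLast t)) ->
     (ole (d (SLast t)) (d a) <-> d (SApp t (SLast t)) = d (SApp t a)).
Hypothesis H5 : forall t, D (SLast t) -> D (SApp t (SLast t)) ->
     d (SLast t) = omega -> d (SApp t (SLast t)) = omega.
Hypothesis H6 : forall a, D (SApp TOne a) -> D a -> d (SApp TOne a) = d a.
Hypothesis H8 : forall t u a, D (SApp (TMul t u) a) -> D (SApp t (SApp u a)) ->
     d (SApp (TMul t u) a) = d (SApp t (SApp u a)).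
Hypothesis H9 : forall t u, D (SLast (TMul t u)) -> D (SLast t) -> D (SLast u) ->
     d (SLast (TMul t u)) = omega -> d (SLast t) = omega /\ d (SLast u) = omega.
Hypothesis H10 : forall t a, D (SApp (TStar t) a) -> D a -> D (SApp t (SApp (TStar t) a)) ->
     olt (fin 0) (d a) -> olt (d a) omega ->
     olt (d (SApp t (SApp (TStar t) a))) (d a).
Hypothesis H11 : forall t a, D (SApp (TStar t) a) -> D a ->
     D (SApp t (SSuc (SApp (TStar t) a))) ->
     olt (d (SApp (TStar t) a)) omega ->
     ole (d a) (d (SApp t (SSuc (SApp (TStar t) a)))).
Hypothesis H12 : forall t, D (SLast (TStar t)) -> D (SLast t) ->
     d (SLast (TStar t)) = omega -> d (SLast t) = omega.

Lemma D_arg t a : D (SApp t a) -> D a.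
Proof. intro H; eapply Dstep; [exact H| constructor]. Qed.
Lemma D_tl t a : D (SApp t a) -> D (SApp t (SLast t)).
Proof. intro H; eapply Dstep; [exact H| constructor]. Qed.
Lemma D_l t a : D (SApp t a) -> D (SLast t).
Proof. intro H; eapply D_arg, D_tl, H. Qed.

Lemma last_om_fin t a j : D (SApp t a) -> d (SLast t) = omega -> d a = fin j -> d (SApp t a) <> omega.
Proof.
  intros H L E e. assert (X := H4 t a H (D_arg _ _ H) (D_l _ _ H) (D_tl _ _ H)).
  rewrite L, E in X. simpl in X. rewrite (H5 t (D_l _ _ H) (D_tl _ _ H) L) in X.
  apply X. auto.
Qed.

Lemma last_om_om t a : D (SApp t a) -> d (SLast t) = omega -> d a = omega -> d (SApp t a) = omega.
Proof.
  intros H L E. assert (X := H4 t a H (D_arg _ _ H) (D_l _ _ H) (D_tl _ _ H)).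
  rewrite L, E in X. simpl in X. rewrite <- (proj1 X I). apply (H5 t (D_l _ _ H) (D_tl _ _ H) L).
Qed.

Section Var.
Variable i : nat.
Let x := TVar i.
Definition hh (n : nat) : onat :=
  oinf (fun y => exists b, D (SApp x b) /\ ole (fin n) (d b) /\ y = d (SApp x b)).
Lemma hh_le n b : D (SApp x b) -> ole (fin n) (d b) -> ole (hh n) (d (SApp x b)).
Proof. intros. apply (proj1 (oinf_spec _)). eauto. Qed.
Lemma hh_ge n y : (forall b, D (SApp x b) -> ole (fin n) (d b) -> ole y (d (SApp x b))) -> ole y (hh n).
Proof. intros H. apply (proj2 (oinf_spec _)). intros s [b [h1 [h2 ->]]]; auto. Qed.
Lemma hh_mono n m : n <= m -> ole (hh n) (hh m).
Proof. intros h. apply hh_ge. intros b Hb hb. apply hh_le; auto. eapply ole_trans; [|exact hb]. simpl; lia. Qed.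
Lemma hh_at a n : D (SApp x a) -> d a = fin n -> hh n = d (SApp x a).
Proof.
  intros Ha E. apply ole_antisym.
  - apply hh_le; auto. rewrite E; apply ole_refl.
  - apply hh_ge. intros b Hb hb. apply H1; eauto using D_arg. rewrite E; auto.
Qed.

Definition vfin (n : nat) : onat :=
  match n with
  | 0 => fin 0
  | S n => if excluded_middle_informative (d (SLast x) = omega)
           then omin (hh (S n)) (fin (N + S n)) else hh (S n)
  end.
Definition vf (m : onat) : onat :=
  match m with fin n => vfin n | omega => osup (fun y => exists n, y = vfin n) end.

Lemma vfin_mono n m : n <= m -> ole (vfin n) (vfin m).
Proof.
  intros h. destruct n as [|n]; [apply ole_0|]. destruct m as [|m]; [lia|]. simpl.
  destruct excluded_middle_informative.
  - apply ole_omin; split.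
    + eapply ole_trans; [apply omin_le_l| apply hh_mono; lia].
    + eapply ole_trans; [apply omin_le_r| simpl; lia].
  - apply hh_mono; lia.
Qed.

Lemma vf_tw : is_tw vf.
Proof.
  apply tw_intro; [| reflexivity | exact (osup_spec _)].
  intros [a|] [b|] h; simpl in *.
  - apply vfin_mono; auto.
  - apply (proj1 (osup_spec _)); eauto.
  - contradiction.
  - apply ole_refl.
Qed.

Lemma vf_fin a : D (SApp x a) -> d (SLast x) = omega -> forall n, vf (fin n) <> omega.
Proof.
  intros _ L [|n]; simpl; [discriminate|]. destruct excluded_middle_informative; [|contradiction].
  destruct (hh (S n)); simpl; discriminate.
Qed.

Lemma vf_val a : D (SApp x a) -> vf (d a) = d (SApp x a).
Proof.
  intros Ha. destruct (d a) as [[|n]|] eqn:E.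
  - simpl. symmetry; apply H2; [eapply D_arg; exact Ha|exact Ha|exact E].
  - simpl. rewrite (hh_at a (S n) Ha E). destruct excluded_middle_informative as [L|L]; auto.
    assert (F := last_om_fin x a (S n) Ha L E).
    destruct (d (SApp x a)) as [V|] eqn:EV; [|contradiction].
    assert (V <= N) by (eapply HN; eauto). simpl. f_equal. lia.
  - simpl. apply (is_lub_unique (fun y => exists n, y = vfin n)); [apply osup_spec|].
    destruct (d (SLast x)) as [l|] eqn:L.
    + set (V := d (SApp x (SLast x))).
      assert (HV : forall b, D (SApp x b) -> ole (fin l) (d b) -> d (SApp x b) = V).
      { intros b Hb hb. symmetry. apply H4; eauto using D_arg, D_l, D_tl. rewrite L; auto. }
      split.
      * intros s [[|m] ->]; [apply ole_0|]. simpl. destruct excluded_middle_informative; [congruence|].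
        apply hh_le; auto. rewrite E; apply ole_omega.
      * intros y Hy. specialize (Hy (vfin (S l)) (ex_intro _ _ eq_refl)). eapply ole_trans; [|exact Hy].
        simpl. destruct excluded_middle_informative; [congruence|].
        rewrite (HV a Ha) by (rewrite E; apply ole_omega).
        apply hh_ge. intros b Hb hb. rewrite (HV b Hb); [apply ole_refl|]. eapply ole_trans; [|exact hb]. simpl; lia.
    + rewrite (last_om_om x a Ha L E). split; [intros; apply ole_omega|].
      intros y Hy. destruct y as [j|]; [exfalso|apply ole_refl].
      specialize (Hy (vfin (S (N + j))) (ex_intro _ _ eq_refl)). simpl in Hy.
      destruct excluded_middle_informative as [_|]; [|contradiction].
      assert (hh (S (N + j)) = omega).
      { apply omega_ole. apply hh_ge. intros b Hb hb. destruct (d b) as [jb|] eqn:Eb.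
        - exfalso. assert (jb <= N) by (eapply HN; [exact (D_arg _ _ Hb) | exact Eb]). simpl in hb; lia.
        - rewrite (last_om_om x b Hb L Eb). apply ole_refl. }
      rewrite H in Hy. simpl in Hy. lia.
Qed.
End Var.

Definition vv : nat -> onat -> onat := fun i => vf i.

Lemma vv_tw : forall i, is_tw (vv i).
Proof. intro i; apply vf_tw. Qed.

Lemma inv t : basic t ->
  (forall a, D (SApp t a) -> eval vv t (d a) = d (SApp t a)) /\
  (forall a, D (SApp t a) -> d (SLast t) = omega -> forall n, eval vv t (fin n) <> omega).
Proof.
  intro B. induction B as [i|u w Bu [Iu Ju] Bw [Iw Jw]|u Bu [Iu Ju]|].
  - split; intros a Ha; simpl; [apply vf_val; auto| apply vf_fin with a; auto].
  - split.
    + intros a Ha. simpl.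
      assert (Ha' : D (SApp u (SApp w a))) by (eapply Dstep; [exact Ha|constructor]).
      assert (Hwa : D (SApp w a)) by (eapply D_arg; eauto).
      rewrite Iw by auto. rewrite Iu by auto. symmetry; apply H8; auto.
    + intros a Ha L n. simpl.
      assert (Ha' : D (SApp u (SApp w a))) by (eapply Dstep; [exact Ha|constructor]).
      assert (Hwa : D (SApp w a)) by (eapply D_arg; eauto).
      destruct (H9 u w (D_l _ _ Ha) (D_l _ _ Ha') (D_l _ _ Hwa) L) as [Lu Lw].
      destruct (eval vv w (fin n)) as [j|] eqn:Ej; [|exfalso; exact (Jw a Hwa Lw n Ej)].
      exact (Ju _ Ha' Lu j).
  - assert (F : is_tw (eval vv u)) by (apply eval_tw; auto using vv_tw).
    assert (SS := star_spec _ F).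
    set (f := eval vv u) in *.
    assert (Hfo : d (SLast u) = omega -> (exists a, D (SApp u a)) -> f omega = omega).
    { intros L [a Ha]. assert (E := Iu _ (D_tl _ _ Ha)). rewrite L in E. rewrite E.
      apply (H5 u (D_l _ _ Ha) (D_tl _ _ Ha) L). }
    split.
    + intros a Ha. simpl. fold f.
      assert (Da := D_arg _ _ Ha).
      assert (D1 : D (SApp u (SApp (TStar u) a))) by (eapply Dstep; [exact Ha|constructor]).
      assert (D2 : D (SApp u (SSuc (SApp (TStar u) a)))) by (eapply Dstep; [exact Ha|constructor]).
      assert (D3 : D (SSuc (SApp (TStar u) a))) by exact (D_arg _ _ D2).
      assert (Dl' := D_l _ _ Ha). assert (Dtl' := D_tl _ _ Ha).
      assert (D4 : D (SApp u (SApp (TStar u) (SLast (TStar u))))) by (eapply Dstep; [exact Dtl'|constructor]).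
      assert (E1 : f (d (SApp (TStar u) a)) = d (SApp u (SApp (TStar u) a))) by (apply Iu; auto).
      assert (E2 : f (d (SSuc (SApp (TStar u) a))) = d (SApp u (SSuc (SApp (TStar u) a)))) by (apply Iu; auto).
      rewrite (H3 _ (D_arg _ _ D1) D3) in E2.
      destruct (d a) as [[|n]|] eqn:Ea.
      * rewrite (H2 _ _ Da Ha Ea). apply tw_zero, SS.
      * assert (X := H10 u a Ha Da D1). rewrite Ea in X.
        specialize (X (olt_0_S _) (olt_fin_omega _)).
        rewrite <- E1 in X.
        destruct (f (d (SApp (TStar u) a))) as [V|] eqn:EV; [|destruct X; contradiction].
        assert (Lo : ole (d (SApp (TStar u) a)) (star f (fin (S n)))).
        { apply (star_galois f _ _ V); auto. destruct X as [X1 X2]. simpl in *. assert (V <> S n) by congruence. lia. }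
        destruct (d (SApp (TStar u) a)) as [j|] eqn:Ej; [|apply omega_ole; auto].
        apply ole_antisym; auto. apply (star_upper f); auto.
        assert (Y := H11 u a Ha Da D2). rewrite Ej, Ea, <- E2 in Y. change (Ssucc (fin j)) with (fin (S j)) in Y.
        specialize (Y (olt_fin_omega _)).
        intro Z. assert (W := ole_trans _ _ _ Y Z). simpl in W; lia.
      *
        assert (Q := H4 (TStar u) a Ha Da Dl' Dtl'). rewrite Ea in Q.
        assert (Eq : d (SApp (TStar u) (SLast (TStar u))) = d (SApp (TStar u) a)) by (apply Q, ole_omega).
        assert (E4 : f (d (SApp (TStar u) (SLast (TStar u)))) = d (SApp u (SApp (TStar u) (SLast (TStar u))))) by (apply Iu; auto).
        destruct (d (SApp (TStar u) a)) as [j|] eqn:Ej.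
        -- assert (Y := H11 u a Ha Da D2). rewrite Ej, Ea, <- E2 in Y. simpl in Y.
           specialize (Y (olt_fin_omega _)). apply omega_ole in Y.
           assert (Fj : f (fin j) <> omega).
           { destruct (d (SLast (TStar u))) as [[|l]|] eqn:EL.
             - assert (Z := H2 _ _ (D_arg _ _ Dtl') Dtl' EL). rewrite Eq in Z. injection Z as ->.
               rewrite (tw_zero _ F). discriminate.
             - assert (Z := H10 u (SLast (TStar u)) Dtl' Dl' D4). rewrite EL in Z.
               specialize (Z (olt_0_S _) (olt_fin_omega _)).
               rewrite <- E4, Eq in Z. intro e; rewrite e in Z. destruct Z; contradiction.
             - assert (Lu := H12 u Dl' (D_l _ _ D1) EL). eapply Ju; eauto. }
           destruct (f (fin j)) as [V|] eqn:EV; [|contradiction].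
           apply (star_omega_fin f _ j V); auto.
        -- apply (star_omega_omega f); auto.
           destruct (d (SLast (TStar u))) as [[|l]|] eqn:EL.
           ++ assert (Z := H2 _ _ (D_arg _ _ Dtl') Dtl' EL). rewrite Eq in Z. discriminate.
           ++ assert (Z := H10 u (SLast (TStar u)) Dtl' Dl' D4). rewrite EL in Z.
              specialize (Z (olt_0_S _) (olt_fin_omega _)).
              rewrite <- E4, Eq in Z. intros n e.
              destruct (f omega) eqn:Efo; [|destruct Z; contradiction].
              assert (M := tw_mono _ F (fin n) omega I). rewrite e, Efo in M. simpl in M; contradiction.
           ++ assert (Lu := H12 u Dl' (D_l _ _ D1) EL). intros n; eapply Ju; eauto.
    + intros a Ha L n. simpl. fold f.
      assert (D1 : D (SApp u (SApp (TStar u) a))) by (eapply Dstep; [exact Ha|constructor]).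
      assert (Lu := H12 u (D_l _ _ Ha) (D_l _ _ D1) L).
      assert (Fo := Hfo Lu (ex_intro _ _ D1)).
      destruct n as [|n]; [rewrite (tw_zero _ (proj1 SS)); discriminate|].
      intro e. assert (X := star_le f _ (fin (S n)) SS). rewrite e, Fo in X. simpl in X; contradiction.
  - split; intros; simpl; [symmetry; apply H6; [assumption| eapply D_arg; eassumption]| discriminate].
Qed.
End Back.


Lemma join_lt v m t1 ts : Forall (fun t => olt (eval v t m) m) (t1 :: ts) ->
  olt (eval v (join_list t1 ts) m) m.
Proof.
  revert t1; induction ts as [|t2 ts IH]; intros t1 H; inversion H; subst; simpl; auto.
  specialize (IH t2 H3). destruct (omax_cases (eval v t1 m) (eval v (join_list t2 ts) m)) as [e|e];
  rewrite e; auto.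
Qed.

Lemma dir2 t1 ts k : Forall basic (t1 :: ts) ->
   (exists d : sample -> onat,
     is_diagram (saturation (fun a => exists t, In t (t1 :: ts) /\ a = SApp t (SVar k))) d /\
     Forall (fun t => olt (d (SApp t (SVar k))) (d (SVar k))) (t1 :: ts)) ->
   ~ W_models_le TOne (join_list t1 ts).
Proof.
  intros FB [d [Hd Hlt]] W.
  set (D := saturation (fun a => exists t, In t (t1 :: ts) /\ a = SApp t (SVar k))) in *.
  destruct Hd as [H1 [H2 [H3 [H4 [H5 [H6 [H7 [H8 [H9 [H10 [H11 H12]]]]]]]]]]].
  assert (Dstep : forall a b, D a -> step a b -> D b) by (intros; eapply sat_step; eauto).
  destruct (list_bound d (SVar k :: flat_map (fun t => Gen t (SVar k)) (t1 :: ts))) as [N HN].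
  assert (HN' : forall s, D s -> forall j, d s = fin j -> j <= N).
  { intros s Hs. apply HN. apply sat_in. exact Hs. }
  set (v := vv D d N).
  assert (Hall : Forall (fun t => olt (eval v t (d (SVar k))) (d (SVar k))) (t1 :: ts)).
  { rewrite Forall_forall in *. intros t Ht.
    assert (Dt : D (SApp t (SVar k))) by (exists (SApp t (SVar k)); split; [eauto|apply rt_refl]).
    destruct (inv D d Dstep N HN' H1 H2 H3 H4 H5 H6 H8 H9 H10 H11 H12 t (FB t Ht)) as [I _].
    unfold v. rewrite (I _ Dt). apply Hlt; auto. }
  apply join_lt in Hall.
  specialize (W v (vv_tw D d N) (d (SVar k))). simpl in W.
  apply (olt_not_ole _ _ Hall W).
Qed.

Theorem proposition3p10 (t1 : term) (ts : list term) (k : nat) :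
  Forall basic (t1 :: ts) ->
  (~ W_models_le TOne (join_list t1 ts) <->
   exists d : sample -> onat,
     is_diagram (saturation (fun a => exists t, In t (t1 :: ts) /\ a = SApp t (SVar k))) d /\
     Forall (fun t => olt (d (SApp t (SVar k))) (d (SVar k))) (t1 :: ts)).
Proof.
  intros FB; split; [apply dir1; auto| apply dir2; auto].
Qed.
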